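(* Let $A$ be a finite alphabet, $u,v\in A^*$, $n\in\mathbb{N}$, and $B,C\subseteq A$ subalphabets. If $uB^*C^*B^*v\subseteq[uv]_n$, then $u(B\cup C)^*v\subseteq[uv]_n$.
   Context: $u\sim_n v$ iff $u,v$ have exactly the same (scattered) subwords of length at most $n$; $[w]_n$ denotes the $\sim_n$-equivalence class of $w$. *)

(* Defs.v *)
From mathcomp Require Import all_boot.
Set Implicit Arguments. Unset Strict Implicit. Unset Printing Implicit Defensive.

(* Words over a finite alphabet A are sequences [seq A]; a scattered subword
   of t is [subseq s t] (mathcomp). *)

Definition simn (A : finType) (n : nat) (u v : seq A) : Prop :=
  forall w : seq A, size w <= n -> subseq w u = subseq w v.

Definition in_class (A : finType) (n : nat) (w x : seq A) : Prop := simn n x w.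

Definition in_star (A : finType) (B : {set A}) (x : seq A) : bool :=
  all (fun a => a \in B) x.

(* Main.v *)
Require Import Defs.
From mathcomp Require Import all_boot.

Set Implicit Arguments.
Section Aux.
Variable A : finType.
Implicit Types u v s t P Q m : seq A.

Fixpoint lpre (u s : seq A) : nat :=
  match u with
  | [::] => 0
  | x :: u' => match s with
               | [::] => 0
               | a :: s' => if a == x then (lpre u' s').+1 else lpre u' s
               end
  end.

Lemma L1 u s t : subseq s (u ++ t) = subseq (drop (lpre u s) s) t.
Proof.
elim: u s => [|x u IH] s /=; first by rewrite drop0.
case: s => [|a s'] /=; first by rewrite sub0seq.
case: eqP => [->|_] /=; first exact: IH.
exact: IH.
Qed.

Lemma L2 u s : subseq (take (lpre u s) s) u.
Proof.
elim: u s => [|x u IH] s /=; first by rewrite take0.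
case: s => [|a s'] //=.
case: eqP => [->|_] /=; first by rewrite eqxx; exact: IH.
apply: subseq_trans (IH _) (subseq_cons _ _).
Qed.

Definition lsuf v s := lpre (rev v) (rev s).

Lemma L3 v s t : subseq s (t ++ v) = subseq (take (size s - lsuf v s) s) t.
Proof. by rewrite -subseq_rev rev_cat L1 drop_rev subseq_rev. Qed.

Lemma L4 v s : subseq (drop (size s - lsuf v s) s) v.
Proof. by rewrite -subseq_rev -take_rev; exact: L2. Qed.

Lemma decomp u v s : exists P m Q, [/\ s = P ++ m ++ Q, subseq P u, subseq Q v &
  forall t, subseq s (u ++ t ++ v) -> subseq m t].
Proof.
set r := drop (lpre u s) s.
exists (take (lpre u s) s), (take (size r - lsuf v r) r), (drop (size r - lsuf v r) r).
split; first by rewrite !cat_take_drop.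
- exact: L2.
- exact: L4.
- by move=> t; rewrite L1 L3.
Qed.

Lemma split_sub s u v : subseq s (u ++ v) ->
  exists s1 s2, [/\ s = s1 ++ s2, subseq s1 u & subseq s2 v].
Proof.
case/subseqP=> mk Hsz ->.
exists (mask (take (size u) mk) u), (mask (drop (size u) mk) v).
split; try exact: mask_subseq.
rewrite -mask_cat ?cat_take_drop //.
by rewrite size_takel // Hsz size_cat leq_addr.
Qed.

Lemma core u v P Q a m1 : ~~ subseq (rcons P a) u -> ~~ subseq (last a m1 :: Q) v ->
  ~~ subseq (P ++ (a :: m1) ++ Q) (u ++ v).
Proof.
move=> Ha Hb; apply/negP => /split_sub [s1 [s2 [E H1 H2]]].
case: (leqP (size s1) (size P)) => Hs.
- move/negP: Hb; apply; apply: subseq_trans H2.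
  have -> : last a m1 :: Q = drop (size P + size m1) (P ++ (a :: m1) ++ Q).
    rewrite drop_cat ltnNge leq_addr /= addKn -cat_cons (lastI a m1).
    by rewrite cat_rcons drop_cat size_belast ltnn subnn drop0.
  rewrite E drop_cat ltnNge (leq_trans Hs (leq_addr _ _)) /=.
  exact: drop_subseq.
- move/negP: Ha; apply; apply: subseq_trans H1.
  have -> : rcons P a = take (size P).+1 (P ++ (a :: m1) ++ Q).
    by rewrite take_cat ltnNge leqnSn subSnn /= take0 cats1.
  rewrite E takel_cat //; exact: take_subseq.
Qed.

Lemma pick2 (B C : {set A}) (a : A) m2 : a \in B :|: C ->
  all (fun c => c \in B :|: C) m2 -> size m2 <= 1 ->
  exists x y z, [/\ in_star B x, in_star C y, in_star B z & x ++ y ++ z = a :: m2].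
Proof.
move=> Ha; move: Ha; rewrite in_setU => Ha.
case: m2 => [|b [|]] //=.
  move=> _ _; case/orP: Ha => Ha.
    by exists [:: a], [::], [::]; rewrite /in_star /= Ha.
  by exists [::], [:: a], [::]; rewrite /in_star /= Ha.
rewrite andbT in_setU => Hb _.
case: (boolP (a \in B)) => Ha'.
  case/orP: Hb => Hb.
    by exists [:: a], [::], [:: b]; rewrite /in_star /= Ha' Hb.
  by exists [:: a], [:: b], [::]; rewrite /in_star /= Ha' Hb.
rewrite (negbTE Ha') /= in Ha.
case/orP: Hb => Hb.
  by exists [::], [:: a], [:: b]; rewrite /in_star /= Ha Hb.
by exists [::], [:: a; b], [::]; rewrite /in_star /= Ha Hb.
Qed.

End Aux.

Theorem lemma16 (A : finType) (u v : seq A) (n : nat) (B C : {set A}) :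
  (forall x y z : seq A, in_star B x -> in_star C y -> in_star B z ->
     in_class n (u ++ v) (u ++ x ++ y ++ z ++ v)) ->
  forall w : seq A, in_star (B :|: C) w -> in_class n (u ++ v) (u ++ w ++ v).
Proof.
move=> H w Hw s Hs; apply/idP/idP => Hsub.
  have [P [m [Q [E HP HQ Hm]]]] := @decomp A u v s.
  have Hmw := Hm w Hsub.
  case: m E Hm Hmw => [|a m1] E Hm Hmw.
    by rewrite E /=; apply: cat_subseq.
  exfalso.
  have Ha : ~~ subseq (rcons P a) u.
    apply/negP => Hr.
    have : subseq s (u ++ m1 ++ v).
      rewrite E /= -cat_rcons !catA.
      exact: cat_subseq (cat_subseq Hr (subseq_refl _)) HQ.
    by move/Hm/size_subseq; rewrite /= ltnn.
  have Hb : ~~ subseq (last a m1 :: Q) v.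
    apply/negP => Hr.
    have : subseq s (u ++ belast a m1 ++ v).
      rewrite E (lastI a m1) cat_rcons.
      exact: cat_subseq HP (cat_subseq (subseq_refl _) Hr).
    by move/Hm/size_subseq; rewrite size_belast /= ltnn.
  have Hall : all (fun c => c \in B :|: C) (a :: m1).
    apply/allP => c /(mem_subseq Hmw) Hc; exact: (allP Hw).
  have [m2 [Hl Hsz Hsz1 Hsub2]] : exists m2, [/\ last a m2 = last a m1,
      size m2 <= size m1, size m2 <= 1 & subseq m2 m1].
    case: (m1) => [|b m1']; first by exists [::].
    exists [:: last b m1']; split => //; rewrite sub1seq; exact: mem_last.
  have Hall2 : all (fun c => c \in B :|: C) m2.
    apply/allP => c /(mem_subseq Hsub2) Hc; apply: (allP Hall).
    by rewrite inE Hc orbT.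
  have [x [y [z [Hx Hy Hz Exyz]]]] :=
    @pick2 A B C a m2 (allP Hall a (mem_head _ _)) Hall2 Hsz1.
  have Hc : ~~ subseq (P ++ (a :: m2) ++ Q) (u ++ v).
    by apply: (@core A u v P Q a m2 Ha); rewrite Hl.
  have Hs' : size (P ++ (a :: m2) ++ Q) <= n.
    apply: leq_trans Hs; rewrite E !size_cat /= leq_add2l ltnS leq_add2r //.
  have := H x y z Hx Hy Hz _ Hs'.
  have -> : x ++ y ++ z ++ v = (a :: m2) ++ v by rewrite -Exyz -!catA.
  rewrite (cat_subseq HP (cat_subseq (subseq_refl _) HQ)).
  by rewrite (negbTE Hc).
apply: subseq_trans Hsub _.
by apply: cat_subseq => //; apply: suffix_subseq.
Qed.
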